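(* For every connected twin-free graph $G$ with $n$ vertices, $i_{\max}(G)>\log_2(n)$.
   Context: $i_{\max}(G)$ denotes the number of maximal independent sets of $G$. A graph is twin-free if no two vertices have the same open neighbourhood. *)

(* Defs.v *)
From mathcomp Require Import all_boot.
From Stdlib Require Import Reals.
Set Implicit Arguments. Unset Strict Implicit. Unset Printing Implicit Defensive.

Definition simple_graph (T : finType) (e : rel T) : Prop :=
  symmetric e /\ irreflexive e.

Definition open_nbhd (T : finType) (e : rel T) (x : T) : {set T} := [set y | e x y].

Definition independent (T : finType) (e : rel T) (S : {set T}) : bool :=
  [forall x in S, forall y in S, ~~ e x y].

Definition maximal_independent (T : finType) (e : rel T) (S : {set T}) : bool :=
  independent e S && [forall x, (x \notin S) ==> ~~ independent e (x |: S)].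

Definition imax (T : finType) (e : rel T) : nat :=
  #|[set S : {set T} | maximal_independent e S]|.

Definition connected_graph (T : finType) (e : rel T) : Prop :=
  forall x y : T, connect e x y.

Definition twin_free (T : finType) (e : rel T) : Prop :=
  forall x y : T, x != y -> open_nbhd e x != open_nbhd e y.

Definition log2R (x : R) : R := (ln x / ln 2)%R.

(* Main.v *)
Require Import Defs.
From mathcomp Require Import all_boot.

Section G.
Variables (T : finType) (e : rel T).
Hypothesis sym : symmetric e.
Hypothesis irr : irreflexive e.

Lemma indepP (S : {set T}) :
  reflect (forall x y, x \in S -> y \in S -> ~~ e x y) (independent e S).
Proof.
apply: (iffP forall_inP) => [H x y xS yS|H x xS].
  by move/forall_inP: (H x xS); apply.
by apply/forall_inP => y yS; apply: H.
Qed.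

Lemma ext (S0 : {set T}) : independent e S0 ->
  exists S, maximal_independent e S && (S0 \subset S).
Proof.
move=> i0.
have P0 : independent e S0 && (S0 \subset S0) by rewrite i0 subxx.
case: (@arg_maxnP _ S0 (fun S => independent e S && (S0 \subset S)) (fun S => #|S|) P0).
move=> S /andP[iS sS] Hmax; exists S; rewrite sS andbT /maximal_independent iS /=.
apply/forallP => x; apply/implyP => xS; apply/negP => ixS.
have := Hmax (x |: S); rewrite ixS (subset_trans sS) ?subsetUr //.
rewrite cardsU1 xS /= => /(_ isT); rewrite add1n ltnn; done.
Qed.

Lemma imax_pos : (0 < imax e)%N.
Proof.
have i0 : independent e set0 by apply/indepP => x y; rewrite inE.
case: (ext set0 i0) => S /andP[mS _].
by rewrite /imax card_gt0; apply/set0Pn; exists S; rewrite inE.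
Qed.

Definition F (v : T) : {set {set T}} :=
  [set S | maximal_independent e S & v \in S].

Lemma memF S v : (S \in F v) = maximal_independent e S && (v \in S).
Proof. by rewrite inE. Qed.

Lemma indep1 v : independent e [set v].
Proof. by apply/indepP => x y; rewrite !inE => /eqP-> /eqP->; rewrite irr. Qed.

Lemma F_ne (v : T) : F v != set0.
Proof.
case: (ext [set v] (indep1 v)) => S /andP[mS sS]; apply/set0Pn; exists S.
by rewrite memF mS (subsetP sS) // set11.
Qed.

Lemma key a b : F a = F b -> forall w, e a w -> e b w.
Proof.
move=> Fab w aw; apply/negPn/negP => bw.
have ba : ~~ e b a.
  case: (ext [set a] (indep1 a)) => S /andP[mS sS].
  have aS : a \in S by rewrite (subsetP sS) // set11.
  have : S \in F a by rewrite memF mS aS.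
  rewrite Fab memF => /andP[_ bS].
  by move/andP: mS => [/indepP iS _]; apply: iS.
have wb : w != b by apply: contraNneq ba => <-; rewrite sym.
have ibw : independent e [set b; w].
  apply/indepP => x y; rewrite !inE => /orP[]/eqP-> /orP[]/eqP->;
    by rewrite ?irr // sym.
case: (ext [set b; w] ibw) => S /andP[mS sS].
have bS : b \in S by rewrite (subsetP sS) // !inE eqxx.
have wS : w \in S by rewrite (subsetP sS) // !inE eqxx orbT.
have : S \in F b by rewrite memF mS bS.
rewrite -Fab memF => /andP[_ aS].
move/andP: mS => [/indepP iS _].
by move: (iS a w aS wS); rewrite aw.
Qed.

Hypothesis tf : twin_free e.

Lemma F_inj : injective F.
Proof.
move=> u v Fuv; apply/eqP; apply/negPn/negP => uv.
move: (tf u v uv) => /eqP; apply; apply/setP => w; rewrite !inE.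
by apply/idP/idP; [exact: key Fuv w | exact: key (esym Fuv) w].
Qed.

Lemma card_bound : (#|T| < 2 ^ imax e)%N.
Proof.
set M := [set S : {set T} | maximal_independent e S].
have sub : F @: T \subset powerset M :\ set0.
  apply/subsetP => X /imsetP[v _ ->]; rewrite !inE F_ne /=.
  by apply/subsetP => S; rewrite memF inE => /andP[].
have := subset_leq_card sub.
rewrite card_imset; last exact: F_inj.
rewrite cardsD card_powerset.
have -> : #|powerset M :&: [set set0]| = 1.
  by rewrite (setIidPr _) ?cards1 // sub1set inE sub0set.
rewrite /imax -/M => h; apply: leq_ltn_trans h _.
by rewrite subn1 prednK // expn_gt0.
Qed.

End G.

From Stdlib Require Import Reals.
From Stdlib Require Import Lra.


Lemma real_part (n k : nat) : leq 1 k -> leq (S n) (expn 2 k) ->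
  (log2R (INR n) < INR k)%R.
Proof.
move=> k0 nk; rewrite /log2R.
have l2 : (0 < ln 2)%R.
  rewrite -ln_1; apply: ln_increasing; lra.
have kpos : (0 < INR k)%R by apply: lt_0_INR; apply/ltP.
apply (Rmult_lt_reg_r (ln 2)) => //.
rewrite /Rdiv Rmult_assoc Rinv_l; last lra.
rewrite Rmult_1_r -ln_pow; last lra.
case: n nk => [|n] nk.
  have ln0 : ln 0 = 0%R by unfold ln; case: (Rlt_dec 0 0) => h; [exfalso; lra|reflexivity].
  rewrite /= ln0 ln_pow; last lra. by apply: Rmult_lt_0_compat.
apply: ln_increasing; first by apply: lt_0_INR; apply/ltP.
have -> : (2 ^ k)%R = INR (2 ^ k) by rewrite pow_INR.
have E : forall m j, expn m j = Nat.pow m j.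
  by move=> m; elim=> // j IH; rewrite expnS IH.
apply: lt_INR; apply/ltP; by rewrite -E.
Qed.

Theorem proposition2p3 (T : finType) (e : rel T) :
  simple_graph e -> connected_graph e -> twin_free e ->
  (log2R (INR #|T|) < INR (imax e))%R.
Proof.
move=> [sym irr] _ tf.
apply: real_part; first exact: imax_pos.
exact: card_bound.
Qed.
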